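(* Fix $l,r>0$, $0<\alpha<\beta<1$ and diffusion constants $D_1,D_2>0$, let $\delta=\frac{D_2-D_1}{D_2+D_1}$, and for each $Q_0\in\mathbb{R}$ let $A(Q_0,\delta)\in(0,A_M)$ be the unique solution $A$ of $G_2(Q_0,A,\delta)=0$. (a) If $D_1<D_2$ (i.e. $\delta>0$), then there exists $Q_0^-<0$ such that $\partial_{Q_0}A(Q_0,\delta)$ has the same sign as $l-r$ when $Q_0>Q_0^-$, and the opposite sign when $Q_0<Q_0^-$. (b) If $D_1>D_2$ (i.e. $\delta<0$), then there exists $Q_0^+>0$ such that $\partial_{Q_0}A(Q_0,\delta)$ has the sign opposite to that of $l-r$ when $Q_0<Q_0^+$, and the same sign as $l-r$ when $Q_0>Q_0^+$.
   Context: Setting: reduction of the steady zero-current Poisson–Nernst–Planck problem for two ion species with valences $\pm1$; $l,r>0$ are boundary concentrations, the permanent charge is $2Q_0$ on $(a,b)$ and $0$ elsewhere in $(0,1)$, $\alpha=H(a)/H(1)$, $\beta=H(b)/H(1)$ with $H(x)=\int_0^x ds/h(s)$ and $h>0$ the cross-sectional area, so $0<\alpha<\beta<1$. For $Q_0\in\mathbb{R}$, $A>0$ define $B=\frac{1-\beta}{\alpha}(l-A)+r$, $A_M=l+\frac{\alpha}{1-\beta}r$, $S_a=\sqrt{Q_0^2+A^2}$, $S_b=\sqrt{Q_0^2+B^2}$, $N=A-l+S_a-S_b$, and $G_2(Q_0,A,\delta)=\delta Q_0\ln\frac{S_a+\delta Q_0}{S_b+\delta Q_0}-N$. It is known that for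 each $Q_0$ there is a unique $A=A(Q_0,\delta)\in(0,A_M)$ with $G_2(Q_0,A,\delta)=0$, depending differentiably on $Q_0$; $A$ is the geometric mean $\sqrt{c_1(a)c_2(a)}$ of the two concentrations at $x=a$. *)

(* Defs.v *)
From Stdlib Require Import Reals.
From Coquelicot Require Import Coquelicot.
Open Scope R_scope.

Definition sgn (x : R) : R :=
  if Rlt_dec 0 x then 1 else if Rlt_dec x 0 then -1 else 0.

Definition delta_of (D1 D2 : R) : R := (D2 - D1) / (D2 + D1).

Definition B_of (l r alpha beta A : R) : R := (1 - beta) / alpha * (l - A) + r.
Definition A_M (l r alpha beta : R) : R := l + alpha / (1 - beta) * r.
Definition S_a (Q0 A : R) : R := sqrt (Q0 ^ 2 + A ^ 2).
Definition S_b (l r alpha beta Q0 A : R) : R :=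
  sqrt (Q0 ^ 2 + (B_of l r alpha beta A) ^ 2).
Definition N_of (l r alpha beta Q0 A : R) : R :=
  A - l + S_a Q0 A - S_b l r alpha beta Q0 A.

Definition G2 (l r alpha beta Q0 A delta : R) : R :=
  delta * Q0 * ln ((S_a Q0 A + delta * Q0) / (S_b l r alpha beta Q0 A + delta * Q0))
  - N_of l r alpha beta Q0 A.

(* Main.v *)
Require Import Defs.
From Stdlib Require Import Reals.
From Coquelicot Require Import Coquelicot.
From Stdlib Require Import Lra Psatz.
Open Scope R_scope.

Lemma exd_cont (f : R -> R) x : ex_derive f x -> continuity_pt f x.
Proof. intros H. apply continuity_pt_filterlim. apply (ex_derive_continuous f x H). Qed.

Lemma ln_le_sub1 x : 0 < x -> ln x <= x - 1.
Proof. intros Hx. pose proof (exp_ineq1_le (ln x)). rewrite exp_ln in H; lra. Qed.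

Lemma psi_mvt (t : R) : 0 < t -> 0 <= (ln t * (t + 1) - 2 * (t - 1)) * (t - 1).
Proof.
intros Ht.
destruct (MVT_gen (fun t => ln t * (t + 1) - 2 * (t - 1)) 1 t (fun c => ln c + 1 / c - 1)) as [c [Hc Heq]].
- intros x Hx. assert (0 < x).
  { destruct Hx as [Hx _]. apply Rlt_le_trans with (2 := Rlt_le _ _ Hx). apply Rmin_glb_lt; lra. }
  auto_derive. lra. field. lra.
- intros x Hx. assert (0 < x).
  { destruct Hx as [Hx _]. apply Rlt_le_trans with (2 := Hx). apply Rmin_glb_lt; lra. }
  apply exd_cont. auto_derive. lra.
- assert (0 < c).
  { destruct Hc as [Hc _]. apply Rlt_le_trans with (2 := Hc). apply Rmin_glb_lt; lra. }
  cbv beta in Heq; rewrite ln_1 in Heq.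
  pose proof (ln_le_sub1 (/ c) ltac:(apply Rinv_0_lt_compat; lra)).
  rewrite ln_Rinv in H0; [|lra].
  assert (0 <= ln c + 1 / c - 1) by (unfold Rdiv; lra).
  assert (E : ln t * (t + 1) - 2 * (t - 1) = (ln c + 1 / c - 1) * (t - 1)) by lra.
  rewrite E. set (z := ln c + 1 / c - 1) in *. set (z2 := 2 * (c - 1 - ln c)) in *. replace ((z * (t - 1)) * (t - 1)) with (z * ((t-1)*(t-1))) by ring. apply Rmult_le_pos; [assumption | apply Rle_0_sqr].
Qed.

Lemma phi_mvt (w : R) : 0 < w -> 0 <= (w^2 - 1 - 2 * w * ln w) * (w - 1).
Proof.
intros Hw.
destruct (MVT_gen (fun w => w^2 - 1 - 2 * w * ln w) 1 w (fun c => 2 * (c - 1 - ln c))) as [c [Hc Heq]].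
- intros x Hx. assert (0 < x).
  { destruct Hx as [Hx _]. apply Rlt_le_trans with (2 := Rlt_le _ _ Hx). apply Rmin_glb_lt; lra. }
  auto_derive. lra. field. lra.
- intros x Hx. assert (0 < x).
  { destruct Hx as [Hx _]. apply Rlt_le_trans with (2 := Hx). apply Rmin_glb_lt; lra. }
  apply exd_cont. auto_derive. lra.
- assert (0 < c).
  { destruct Hc as [Hc _]. apply Rlt_le_trans with (2 := Hc). apply Rmin_glb_lt; lra. }
  cbv beta in Heq; rewrite ln_1 in Heq.
  pose proof (ln_le_sub1 c H).
  assert (E : w^2 - 1 - 2 * w * ln w = 2 * (c - 1 - ln c) * (w - 1)) by lra.
  rewrite E. assert (0 <= 2 * (c - 1 - ln c)) by lra. set (z2 := 2 * (c - 1 - ln c)) in *. replace (z2 * (w - 1) * (w - 1)) with (z2 * ((w-1)*(w-1))) by ring. apply Rmult_le_pos; [assumption | apply Rle_0_sqr].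
Qed.

Lemma ln_sign w : 0 < w -> 0 <= ln w * (w - 1).
Proof.
intros Hw. destruct (Rle_lt_dec 1 w).
- assert (0 <= ln w). { rewrite <- ln_1. apply ln_le; lra. } nra.
- assert (ln w <= 0). { rewrite <- ln_1. apply ln_le; lra. } nra.
Qed.

Lemma logmean_lower u v : 0 < u -> 0 < v ->
  2 * (u - v)^2 <= ln (u / v) * (u - v) * (u + v).
Proof.
intros Hu Hv. assert (Ht : 0 < u / v) by (apply Rdiv_lt_0_compat; lra).
pose proof (psi_mvt _ Ht).
assert (E1 : u = (u / v) * v) by (field; lra).
set (t := u / v) in *. rewrite E1. 
assert (0 <= v^2 * ((ln t * (t + 1) - 2 * (t - 1)) * (t - 1))) by (apply Rmult_le_pos; nra).
nra.
Qed.

Lemma logmean_upper u v : 0 < u -> 0 < v ->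
  ln (u / v) ^ 2 * (u * v) <= (u - v)^2.
Proof.
intros Hu Hv. assert (Ht : 0 < u / v) by (apply Rdiv_lt_0_compat; lra).
set (w := sqrt (u / v)).
assert (Hw : 0 < w) by (apply sqrt_lt_R0; auto).
assert (Hw2 : w * w = u / v) by (apply sqrt_sqrt; lra).
assert (Hl : ln (u / v) = 2 * ln w) by (rewrite <- Hw2, ln_mult; lra).
assert (Key : 4 * w^2 * ln w ^ 2 <= (w^2 - 1)^2).
{ pose proof (phi_mvt w Hw). pose proof (ln_sign w Hw).
  assert (0 <= (w^2 - 1 + 2 * w * ln w) * (w - 1)) by nra.
  assert (0 <= ((w^2 - 1 - 2 * w * ln w) * (w^2 - 1 + 2 * w * ln w)) * (w - 1)^2) by nra.
  destruct (Req_dec w 1) as [->|Hne].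
  - rewrite ln_1. nra.
  - assert (0 < (w - 1)^2) by (apply pow2_gt_0; lra). 
    assert (0 <= (w^2 - 1 - 2 * w * ln w) * (w^2 - 1 + 2 * w * ln w)).
    { apply (Rmult_le_reg_r ((w-1)^2)); nra. }
    nra. }
assert (E1 : u = (w * w) * v) by (rewrite Hw2; field; lra).
rewrite Hl, E1. 
assert (0 <= v^2) by nra.
assert (v^2 * (4 * w^2 * ln w ^ 2) <= v^2 * (w^2 - 1)^2) by (apply Rmult_le_compat_l; auto).
nra.
Qed.

Lemma cont_eps (f : R -> R) x : continuity_pt f x ->
  forall eps, 0 < eps -> exists del, 0 < del /\ forall y, Rabs (y - x) < del -> Rabs (f y - f x) < eps.
Proof.
intros Hc eps He. destruct (Hc eps He) as [alp [Ha H]].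
exists alp. split; auto. intros y Hy.
destruct (Req_dec y x) as [->|Hne].
- rewrite Rminus_diag, Rabs_R0. auto.
- apply H. split. split. exact I. auto. exact Hy.
Qed.

Lemma cont_pos (f : R -> R) x : continuity_pt f x -> 0 < f x ->
  exists del, 0 < del /\ forall y, Rabs (y - x) < del -> 0 < f y.
Proof.
intros Hc Hp. destruct (cont_eps f x Hc (f x) Hp) as [del [Hd H]].
exists del. split; auto. intros y Hy. specialize (H y Hy).
apply Rabs_def2 in H. lra.
Qed.

Lemma cont_neg (f : R -> R) x : continuity_pt f x -> f x < 0 ->
  exists del, 0 < del /\ forall y, Rabs (y - x) < del -> f y < 0.
Proof.
intros Hc Hp. destruct (cont_eps f x Hc (- f x) ltac:(lra)) as [del [Hd H]].
exists del. split; auto. intros y Hy. specialize (H y Hy).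
apply Rabs_def2 in H. lra.
Qed.

Lemma deriv_local (f : R -> R) z d : is_derive f z d -> 0 < d -> f z = 0 ->
  exists eps, 0 < eps /\ forall h, 0 < h < eps -> 0 < f (z + h) /\ f (z - h) < 0.
Proof.
intros Hd Hp Hz. apply is_derive_Reals in Hd.
destruct (Hd (d / 2) ltac:(lra)) as [del H].
exists del. split. apply cond_pos. intros h Hh.
split.
- assert (Hx := H h ltac:(lra) ltac:(rewrite Rabs_pos_eq; lra)).
  rewrite Hz in Hx. apply Rabs_def2 in Hx.
  assert (d / 2 < f (z + h) / h) by lra.
  assert (0 < f (z + h) / h) by lra.
  apply Rdiv_pos_cases in H1. destruct H1 as [[A B]|[A B]]; lra.
- assert (Hx := H (- h) ltac:(lra) ltac:(rewrite Rabs_left; lra)).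
  rewrite Hz in Hx. apply Rabs_def2 in Hx.
  replace (z + - h) with (z - h) in Hx by ring.
  assert (0 < (f (z - h) - 0) / - h) by lra.
  apply Rdiv_pos_cases in H0. destruct H0 as [[A B]|[A B]]; lra.
Qed.

Lemma crossing (f : R -> R) (S : R) :
  (forall x, continuity_pt f x) ->
  (forall x, 0 <= x -> 0 < f x) ->
  (forall x, x <= S -> f x < 0) ->
  (forall x, x < 0 -> f x = 0 -> exists d, is_derive f x d /\ 0 < d) ->
  exists Qm, Qm < 0 /\ forall x, (Qm < x -> 0 < f x) /\ (x < Qm -> f x < 0).
Proof.
intros Hc Hpos Hneg Hder.
set (E := fun x => x <= 0 /\ f x <= 0).
assert (HbE : bound E) by (exists 0; intros x [Hx _]; exact Hx).
assert (HnE : exists x, E x).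
{ exists (Rmin S 0). split. apply Rmin_r. left. apply Hneg, Rmin_l. }
destruct (completeness E HbE HnE) as [Qm [Hub Hlub]].
assert (Hm0 : Qm < 0).
{ destruct (cont_pos f 0 (Hc 0) (Hpos 0 (Rle_refl 0))) as [del [Hd H]].
  assert (Qm <= - (del / 2)).
  { apply Hlub. intros x [Hx Hfx].
    destruct (Rle_lt_dec x (- del)). lra.
    assert (0 < f x) by (apply H; rewrite Rabs_left1; lra). lra. }
  lra. }
assert (Hright : forall x, Qm < x -> 0 < f x).
{ intros x Hx. destruct (Rle_lt_dec x 0) as [Hx0|Hx0].
  - destruct (Rle_lt_dec (f x) 0) as [Hf|Hf]; auto.
    assert (x <= Qm) by (apply Hub; split; auto). lra.
  - apply Hpos; lra. }
assert (HfQ : f Qm = 0).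
{ destruct (Rtotal_order (f Qm) 0) as [Hl|[He|Hg]]; auto.
  - destruct (cont_neg f Qm (Hc Qm) Hl) as [del [Hd H]].
    set (y := Qm + Rmin del (- Qm) / 2).
    assert (0 < Rmin del (- Qm)) by (apply Rmin_glb_lt; lra).
    assert (Rmin del (- Qm) <= del) by apply Rmin_l.
    assert (Rmin del (- Qm) <= - Qm) by apply Rmin_r.
    assert (y <= Qm).
    { apply Hub. split. unfold y; lra. left. apply H. unfold y.
      rewrite Rabs_pos_eq; lra. }
    unfold y in *; lra.
  - destruct (cont_pos f Qm (Hc Qm) Hg) as [del [Hd H]].
    assert (Qm <= Qm - del / 2).
    { apply Hlub. intros x [Hx Hfx].
      assert (x <= Qm) by (apply Hub; split; auto).
      destruct (Rle_lt_dec x (Qm - del)). lra.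
      assert (0 < f x) by (apply H; rewrite Rabs_left1; lra). lra. }
    lra. }
exists Qm. split; auto. intros x. split; [apply Hright|].
intros Hx.
destruct (Rlt_le_dec (f x) 0) as [Hfx|Hfx]; auto. exfalso.
destruct (Hder Qm Hm0 HfQ) as [d [Hd Hdp]].
destruct (deriv_local f Qm d Hd Hdp HfQ) as [eps [He Hloc]].
assert (Hxle : x <= Qm - eps).
{ destruct (Rle_lt_dec x (Qm - eps)); auto.
  destruct (Hloc (Qm - x) ltac:(lra)) as [_ H]. replace (Qm - (Qm - x)) with x in H by ring. lra. }
set (b := Qm - eps / 2).
set (E2 := fun y => x <= y <= b /\ 0 <= f y).
assert (HbE2 : bound E2) by (exists b; intros y [[_ Hy] _]; exact Hy).
assert (HnE2 : exists y, E2 y) by (exists x; split; [unfold b; lra | auto]).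
destruct (completeness E2 HbE2 HnE2) as [Z [HubZ HlubZ]].
assert (HxZ : x <= Z) by (apply HubZ; split; [unfold b; lra|auto]).
assert (HZb : Z <= b) by (apply HlubZ; intros y [[_ Hy] _]; exact Hy).
assert (Hclaim : forall y, Z < y < Qm -> f y < 0).
{ intros y Hy. destruct (Rle_lt_dec y b) as [Hyb|Hyb].
  - destruct (Rlt_le_dec (f y) 0) as [Hf|Hf]; auto.
    assert (y <= Z) by (apply HubZ; split; [lra|auto]). lra.
  - destruct (Hloc (Qm - y) ltac:(unfold b in Hyb; lra)) as [_ H].
    replace (Qm - (Qm - y)) with y in H by ring. exact H. }
assert (HfZ1 : 0 <= f Z).
{ destruct (Rlt_le_dec (f Z) 0) as [Hl|Hl]; auto.
  destruct (cont_neg f Z (Hc Z) Hl) as [del [Hd0 H]].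
  assert (Z <= Z - del / 2).
  { apply HlubZ. intros y [Hy Hfy].
    assert (y <= Z) by (apply HubZ; split; auto).
    destruct (Rle_lt_dec y (Z - del)). lra.
    assert (f y < 0) by (apply H; rewrite Rabs_left1; lra). lra. }
  lra. }
assert (HZQ : Z < Qm) by (unfold b in HZb; lra).
assert (HfZ : f Z = 0).
{ destruct (Rle_lt_dec (f Z) 0) as [Hl|Hl]; [lra|].
  destruct (cont_pos f Z (Hc Z) Hl) as [del [Hd0 H]].
  set (y := Z + Rmin del (Qm - Z) / 2).
  assert (0 < Rmin del (Qm - Z)) by (apply Rmin_glb_lt; lra).
  assert (Rmin del (Qm - Z) <= del) by apply Rmin_l.
  assert (Rmin del (Qm - Z) <= Qm - Z) by apply Rmin_r.
  assert (0 < f y) by (apply H; unfold y; rewrite Rabs_pos_eq; lra).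
  assert (f y < 0) by (apply Hclaim; unfold y; lra). lra. }
destruct (Hder Z ltac:(lra) HfZ) as [d' [Hd' Hdp']].
destruct (deriv_local f Z d' Hd' Hdp' HfZ) as [eps' [He' Hloc']].
set (h := Rmin eps' (Qm - Z) / 2).
assert (0 < Rmin eps' (Qm - Z)) by (apply Rmin_glb_lt; lra).
assert (Rmin eps' (Qm - Z) <= eps') by apply Rmin_l.
assert (Rmin eps' (Qm - Z) <= Qm - Z) by apply Rmin_r.
destruct (Hloc' h ltac:(unfold h; lra)) as [Hpz _].
assert (f (Z + h) < 0) by (apply Hclaim; unfold h; lra). lra.
Qed.

Lemma sqrt_gt_abs Q A : 0 < A -> Rabs Q < sqrt (Q^2 + A^2).
Proof.
intros HA. assert (H0 : 0 <= Q^2 + A^2) by nra.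
pose proof (sqrt_sqrt _ H0). pose proof (sqrt_pos (Q^2 + A^2)).
pose proof (pow2_abs Q). pose proof (Rabs_pos Q). nra.
Qed.



Lemma uv_pos Q A d : 0 < A -> -1 < d < 1 -> 0 < sqrt (Q^2 + A^2) + d * Q.
Proof.
intros HA Hd. pose proof (sqrt_gt_abs Q A HA).
destruct (Rle_lt_dec 0 Q). rewrite Rabs_pos_eq in H; nra. rewrite Rabs_left in H; nra.
Qed.

Lemma sqrt_le_mono Q A B : 0 < A -> A <= B -> sqrt (Q^2 + A^2) <= sqrt (Q^2 + B^2).
Proof. intros. apply sqrt_le_1; nra. Qed.

Lemma B_pos l r al be A : 0 < l -> 0 < r -> 0 < al -> al < be -> be < 1 ->
  A < A_M l r al be -> 0 < B_of l r al be A.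
Proof.
intros. unfold A_M, B_of in *.
assert (E : (1 - be) / al * (l - A) + r = (1 - be) / al * (l + al / (1 - be) * r - A)).
{ field. lra. }
rewrite E. apply Rmult_lt_0_compat. apply Rdiv_lt_0_compat; lra. lra.
Qed.

Lemma G_pos_case l r al be Q A d : 0 < A -> 0 < B_of l r al be A -> 0 < d < 1 ->
  A <= B_of l r al be A -> A < l -> 0 < G2 l r al be Q A d.
Proof.
intros HA HB Hd HAB Hl. unfold G2, N_of, S_a, S_b.
set (B := B_of l r al be A) in *.
set (sa := sqrt (Q^2 + A^2)). set (sb := sqrt (Q^2 + B^2)).
assert (Hu : 0 < sa + d * Q) by (apply uv_pos; lra).
assert (Hv : 0 < sb + d * Q) by (apply uv_pos; lra).
assert (Hs : sa <= sb) by (apply sqrt_le_mono; lra).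
assert (Hsa0 : 0 <= sa) by apply sqrt_pos.
assert (Hln : ln ((sa + d * Q) / (sb + d * Q)) <= 0).
{ rewrite <- ln_1. apply ln_le. apply Rdiv_lt_0_compat; lra.
  apply (Rmult_le_reg_r (sb + d * Q)); auto. unfold Rdiv. rewrite Rmult_assoc, Rinv_l; lra. }
destruct (Rlt_le_dec (d * Q) 0) as [HdQ|HdQ].
- assert (0 <= d * Q * ln ((sa + d * Q) / (sb + d * Q))) by nra. lra.
- assert (Hb : - ((sb - sa) / (sa + d * Q)) <= ln ((sa + d * Q) / (sb + d * Q))).
  { assert (E : ln ((sa + d * Q) / (sb + d * Q)) = - ln ((sb + d * Q) / (sa + d * Q))).
    { rewrite <- ln_Rinv by (apply Rdiv_lt_0_compat; lra). f_equal. field. split; lra. }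
    rewrite E. pose proof (ln_le_sub1 ((sb + d * Q) / (sa + d * Q)) ltac:(apply Rdiv_lt_0_compat; lra)).
    assert (E2 : (sb + d * Q) / (sa + d * Q) - 1 = (sb - sa) / (sa + d * Q)) by (field; lra).
    lra. }
  assert (Hq : d * Q * ((sb - sa) / (sa + d * Q)) <= sb - sa).
  { assert (E3 : d * Q * ((sb - sa) / (sa + d * Q)) = (sb - sa) * (d * Q / (sa + d * Q))) by (field; lra).
    rewrite E3. assert (d * Q / (sa + d * Q) <= 1).
    { apply (Rmult_le_reg_r (sa + d * Q)); auto. unfold Rdiv. rewrite Rmult_assoc, Rinv_l; lra. }
    assert (0 <= d * Q / (sa + d * Q)) by (apply Rdiv_le_0_compat; lra). nra. }
  assert (- (sb - sa) <= d * Q * ln ((sa + d * Q) / (sb + d * Q))) by nra.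
  lra.
Qed.

Lemma G_neg_case l r al be Q A d : 0 < A -> 0 < B_of l r al be A -> 0 < d < 1 ->
  B_of l r al be A <= A -> l < A -> G2 l r al be Q A d < 0.
Proof.
intros HA HB Hd HAB Hl. unfold G2, N_of, S_a, S_b.
set (B := B_of l r al be A) in *.
set (sa := sqrt (Q^2 + A^2)). set (sb := sqrt (Q^2 + B^2)).
assert (Hu : 0 < sa + d * Q) by (apply uv_pos; lra).
assert (Hv : 0 < sb + d * Q) by (apply uv_pos; lra).
assert (Hs : sb <= sa) by (apply sqrt_le_mono; lra).
assert (Hsb0 : 0 <= sb) by apply sqrt_pos.
assert (Hln : 0 <= ln ((sa + d * Q) / (sb + d * Q))).
{ rewrite <- ln_1. apply ln_le. lra.
  apply (Rmult_le_reg_r (sb + d * Q)); auto. unfold Rdiv. rewrite Rmult_assoc, Rinv_l; lra. }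
destruct (Rle_lt_dec (d * Q) 0) as [HdQ|HdQ].
- assert (d * Q * ln ((sa + d * Q) / (sb + d * Q)) <= 0) by nra. lra.
- assert (Hb : ln ((sa + d * Q) / (sb + d * Q)) <= (sa - sb) / (sb + d * Q)).
  { pose proof (ln_le_sub1 ((sa + d * Q) / (sb + d * Q)) ltac:(apply Rdiv_lt_0_compat; lra)).
    assert (E2 : (sa + d * Q) / (sb + d * Q) - 1 = (sa - sb) / (sb + d * Q)) by (field; lra).
    lra. }
  assert (Hq : d * Q * ((sa - sb) / (sb + d * Q)) <= sa - sb).
  { assert (E3 : d * Q * ((sa - sb) / (sb + d * Q)) = (sa - sb) * (d * Q / (sb + d * Q))) by (field; lra).
    rewrite E3. assert (d * Q / (sb + d * Q) <= 1).
    { apply (Rmult_le_reg_r (sb + d * Q)); auto. unfold Rdiv. rewrite Rmult_assoc, Rinv_l; lra. }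
    assert (0 <= d * Q / (sb + d * Q)) by (apply Rdiv_le_0_compat; lra). nra. }
  assert (d * Q * ln ((sa + d * Q) / (sb + d * Q)) <= sa - sb) by nra.
  lra.
Qed.

Lemma AB_sign l r al be Q A d : 0 < l -> 0 < r -> 0 < al -> al < be -> be < 1 -> 0 < d < 1 ->
  0 < A < A_M l r al be -> G2 l r al be Q A d = 0 ->
  (r < l -> B_of l r al be A < A) /\ (l < r -> A < B_of l r al be A) /\
  (l = r -> A = B_of l r al be A).
Proof.
intros Hl Hr Hal Hab Hb1 Hd [HA HAM] HG.
assert (HB : 0 < B_of l r al be A) by (apply B_pos; auto).
set (k := (1 - be) / al).
assert (Hk : 0 < k) by (apply Rdiv_lt_0_compat; lra).
assert (EB : B_of l r al be A = k * (l - A) + r) by reflexivity.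
split; [|split].
- intros Hrl. destruct (Rlt_le_dec (B_of l r al be A) A) as [H|H]; auto.
  assert (A < l).
  { rewrite EB in H. destruct (Rlt_le_dec A l); auto. nra. }
  pose proof (G_pos_case l r al be Q A d HA HB Hd H H0). lra.
- intros Hrl. destruct (Rlt_le_dec A (B_of l r al be A)) as [H|H]; auto.
  assert (l < A).
  { rewrite EB in H. destruct (Rlt_le_dec l A); auto. nra. }
  pose proof (G_neg_case l r al be Q A d HA HB Hd H H0). lra.
- intros Hlr. destruct (Rtotal_order A (B_of l r al be A)) as [H|[H|H]]; auto.
  + assert (A < l) by (rewrite EB in H; nra).
    pose proof (G_pos_case l r al be Q A d HA HB Hd (Rlt_le _ _ H) H0). lra.
  + assert (l < A) by (rewrite EB in H; nra).
    pose proof (G_neg_case l r al be Q A d HA HB Hd (Rlt_le _ _ H) H0). lra.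
Qed.



Lemma G_deriv l r al be d (a : R -> R) Q :
  (forall x, ex_derive a x) -> 0 < a Q -> 0 < B_of l r al be (a Q) -> -1 < d < 1 ->
  let sa := sqrt (Q^2 + (a Q)^2) in
  let sb := sqrt (Q^2 + (B_of l r al be (a Q))^2) in
  let u := sa + d * Q in let v := sb + d * Q in
  is_derive (fun Q => G2 l r al be Q (a Q) d) Q
    ((d * (u * v) * ln (u / v) + Q * (1 - d^2) * (u - v)) / (u * v)
      - (1 + a Q / u + (1 - be) / al * B_of l r al be (a Q) / v) * Derive a Q).
Proof.
intros Hd HA HB Hdd sa sb u v.
assert (Hsa : Rabs Q < sa) by (apply sqrt_gt_abs; auto).
assert (Hsb : Rabs Q < sb) by (apply sqrt_gt_abs; auto).
assert (Hu : 0 < u).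
{ unfold u. destruct (Rle_lt_dec 0 Q). rewrite Rabs_pos_eq in Hsa; nra. rewrite Rabs_left in Hsa; nra. }
assert (Hv : 0 < v).
{ unfold v. destruct (Rle_lt_dec 0 Q). rewrite Rabs_pos_eq in Hsb; nra. rewrite Rabs_left in Hsb; nra. }
unfold B_of in *.
unfold G2, N_of, S_a, S_b, B_of.
auto_derive.
{ assert (HB2 : forall z, 0 < z -> 0 < Q*(Q*1) + z*(z*1)) by (intros; nra).
  repeat split; first [apply Hd | exact (Rgt_not_eq _ _ Hv) | exact (Rdiv_lt_0_compat _ _ Hu Hv) | (apply HB2; assumption)]. }
- replace (sqrt (Q * (Q * 1) + a Q * (a Q * 1))) with sa by reflexivity.
  replace (sqrt (Q * (Q * 1) + ((1 - be) / al * (l + - a Q) + r) * (((1 - be) / al * (l + - a Q) + r) * 1))) with sb by reflexivity.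
  replace (Derive (fun x : R => a x) Q) with (Derive a Q) by reflexivity.
  set (ap := Derive a Q).
  replace (ln ((sa + d * Q) * / (sb + d * Q))) with (ln (u / v)) by reflexivity.
  set (LL := ln (u / v)).
  set (B := (1 - be) / al * (l - a Q) + r) in *.
  replace ((1 - be) / al * (l + - a Q) + r) with B by reflexivity.
  set (k := (1 - be) / al) in *.
  assert (sa <> 0) by (pose proof (Rabs_pos Q); lra).
  assert (sb <> 0) by (pose proof (Rabs_pos Q); lra).
  unfold u, v in *. field. split; lra.
Qed.

Lemma poly_core m n e : 0 < m -> 0 < n -> 0 < e -> e < 1 -> 4*n <= m*m ->
 (e*(2-e))*(e*(2-e)) <= (1-e)*(1-e)*(e*e+e*m+n) ->
 2*(1-e)*n <= e*e*(2+m) ->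
 0 < -2*e^3 + e^2*m*(2-3*e) + e^2*m^2*(1-e) + n*(6*e-e^2-2*e^3) + n*m*e*(4-e-e^2) + n^2*(-1+4*e-2*e^2).
Proof. intros.
assert (0 < e*m) by nra. assert (0 < e*n) by nra. assert (0 < e*(1-e)) by nra.
assert (0 < m*n) by nra. assert (0 < e*e) by nra.
nra. Qed.

Definition Ppoly x y d := (1-2*d*d)*(x*y)*(x*y) + d*(1+d*d)*(x+y)*(x*y) + (1-3*d*d)*(x*y) - (x+y-d)*(x+y-d).

Lemma P_pos x y d : 1 < x -> 1 < y -> 0 < d < 1 ->
  (1-d*d)*(1-d*d) <= d*d*((x-d)*(y-d)) ->
  2*d*((x-d)*(y-d)) <= (1-d*d)*(x+y-2*d) -> 0 < Ppoly x y d.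
Proof.
intros Hx Hy [Hd0 Hd1] H1 H2.
pose proof (poly_core (x + y - 2) ((x-1)*(y-1)) (1 - d) ltac:(lra) ltac:(nra) ltac:(lra) ltac:(lra)
  ltac:(pose proof (Rle_0_sqr (x-y)); unfold Rsqr in *; nra)) as H.
assert (E : Ppoly x y d = -2*(1-d)^3 + (1-d)^2*(x+y-2)*(2-3*(1-d)) + (1-d)^2*(x+y-2)^2*(1-(1-d)) + ((x-1)*(y-1))*(6*(1-d)-(1-d)^2-2*(1-d)^3) + ((x-1)*(y-1))*(x+y-2)*(1-d)*(4-(1-d)-(1-d)^2) + ((x-1)*(y-1))^2*(-1+4*(1-d)-2*(1-d)^2)).
{ unfold Ppoly. ring. }
rewrite E. apply H.
- replace ((1 - d) * (2 - (1 - d)) * ((1 - d) * (2 - (1 - d)))) with ((1-d*d)*(1-d*d)) by ring.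
  replace ((1 - (1 - d)) * (1 - (1 - d)) * ((1 - d) * (1 - d) + (1 - d) * (x + y - 2) + (x - 1) * (y - 1))) with (d*d*((x-d)*(y-d))) by ring.
  exact H1.
- replace (2 * (1 - (1 - d)) * ((x - 1) * (y - 1))) with (2*d*((x-d)*(y-d)) - 2*d*((1-d)*(x+y-2)+(1-d)*(1-d))) by ring.
  replace ((1 - d) * (1 - d) * (2 + (x + y - 2))) with ((1-d*d)*(x+y-2*d) - (2*d*((1-d)*(x+y-2)+(1-d)*(1-d))) + ((1-d)*(1-d)*(x+y) - (1-d*d)*(x+y-2*d) + 2*d*((1-d)*(x+y-2)+(1-d)*(1-d)))) by ring.
  assert (Z : (1-d)*(1-d)*(x+y) - (1-d*d)*(x+y-2*d) + 2*d*((1-d)*(x+y-2)+(1-d)*(1-d)) = 0) by ring.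
  lra.
Qed.

Lemma key_ineq s sa sb d LL : 0 < s -> s < sa -> s < sb -> 0 < d < 1 -> sa <> sb ->
  2*d*((sa - d*s)*(sb - d*s)) <= s*(1-d^2)*((sa - d*s)+(sb - d*s)) ->
  s^2*(1-d^2)^2 <= d^2*((sa - d*s)*(sb - d*s)) ->
  d*((sa - d*s)*(sb - d*s))*LL = s*(1-d^2)*((sa - d*s)-(sb - d*s)) ->
  let u := sa - d*s in let v := sb - d*s in let p := -s/sa + d in let q := -s/sb + d in
  let c := 1 - d^2 in
  0 < (sa - sb) * (d*(p*v+q*u)*LL + d*(p*v - q*u) + c*(u - v) + (-s)*c*(p - q)).
Proof.
intros Hs Ha Hb Hd Hne Hlow Hup HLL u v p q c.
set (x := sa / s). set (y := sb / s).
assert (Ex : sa = s * x) by (unfold x; field; lra).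
assert (Ey : sb = s * y) by (unfold y; field; lra).
assert (Hx : 1 < x) by (apply (Rmult_lt_reg_l s); lra).
assert (Hy : 1 < y) by (apply (Rmult_lt_reg_l s); lra).
assert (Hu : 0 < u) by (unfold u; nra).
assert (Hv : 0 < v) by (unfold v; nra).
assert (HLL2 : LL = s*c*(u - v)/(d*(u*v))) by (unfold c, u, v; rewrite <- HLL; field; split; nra).
rewrite HLL2.
assert (HP : 0 < Ppoly x y d).
{ apply P_pos; auto.
  - rewrite Ex, Ey in Hup. 
    apply (Rmult_le_reg_l (s^2)). nra. 
    replace (s^2 * ((1 - d * d) * (1 - d * d))) with (s ^ 2 * (1 - d ^ 2) ^ 2) by ring.
    replace (s ^ 2 * (d * d * ((x - d) * (y - d)))) with (d ^ 2 * ((s * x - d * s) * (s * y - d * s))) by ring.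
    exact Hup.
  - rewrite Ex, Ey in Hlow.
    apply (Rmult_le_reg_l (s^2)). nra.
    replace (s ^ 2 * (2 * d * ((x - d) * (y - d)))) with (2 * d * ((s * x - d * s) * (s * y - d * s))) by ring.
    replace (s ^ 2 * ((1 - d * d) * (x + y - 2 * d))) with (s * (1 - d ^ 2) * (s * x - d * s + (s * y - d * s))) by ring.
    exact Hlow. }
assert (E : d * (p * v + q * u) * (s * c * (u - v) / (d * (u * v))) + d * (p * v - q * u) + c * (u - v) + - s * c * (p - q)
   = s^3 * (x - y) * Ppoly x y d / (x * y * u * v)).
{ unfold p, q, c, u, v, Ppoly. rewrite Ex, Ey. field. 
  unfold u, v in Hu, Hv. rewrite Ex in Hu; rewrite Ey in Hv. repeat split; nra. }
rewrite E, Ex, Ey.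
replace ((s * x - s * y) * (s ^ 3 * (x - y) * Ppoly x y d / (x * y * u * v))) with
  ((s^4 * ((x - y)*(x-y))) * (Ppoly x y d / (x * y * u * v))) by (field; repeat split; nra).
apply Rmult_lt_0_compat.
- apply Rmult_lt_0_compat. apply pow_lt; lra.
  assert (x <> y) by (intro Hxy; apply Hne; rewrite Ex, Ey, Hxy; reflexivity).
  assert (0 < x - y \/ x - y < 0) as [Hp|Hp] by (destruct (Rtotal_order x y) as [h|[h|h]]; [right|tauto|left]; lra); nra.
- apply Rdiv_lt_0_compat; auto. assert (0 < x*y) by (apply Rmult_lt_0_compat; lra). assert (0 < x*y*u) by (apply Rmult_lt_0_compat; assumption). apply Rmult_lt_0_compat; assumption.
Qed.

Definition HH l r al be d (a : R -> R) (Q : R) : R :=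
  d * ((sqrt (Q^2 + (a Q)^2) + d*Q) * (sqrt (Q^2 + ((1-be)/al*(l - a Q)+r)^2) + d*Q)) *
    ln ((sqrt (Q^2 + (a Q)^2) + d*Q) / (sqrt (Q^2 + ((1-be)/al*(l - a Q)+r)^2) + d*Q))
  + Q*(1-d^2)*((sqrt (Q^2 + (a Q)^2) + d*Q) - (sqrt (Q^2 + ((1-be)/al*(l - a Q)+r)^2) + d*Q)).

Lemma H_exd l r al be d (a : R -> R) Q :
  (forall x, ex_derive a x) -> 0 < a Q -> 0 < B_of l r al be (a Q) -> -1 < d < 1 ->
  ex_derive (HH l r al be d a) Q.
Proof.
intros Hd HA HB Hdd.
pose proof (uv_pos Q (a Q) d HA Hdd) as Hu.
pose proof (uv_pos Q (B_of l r al be (a Q)) d HB Hdd) as Hv.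
unfold B_of in *. unfold HH.
assert (HB2 : forall z, 0 < z -> 0 < Q*(Q*1) + z*(z*1)) by (intros; nra).
auto_derive.
repeat split; first [apply Hd | exact (Rgt_not_eq _ _ Hv) | exact (Rdiv_lt_0_compat _ _ Hu Hv) | (apply HB2; assumption)].
Qed.

Lemma H_deriv0 l r al be d (a : R -> R) Q :
  (forall x, ex_derive a x) -> 0 < a Q -> 0 < B_of l r al be (a Q) -> -1 < d < 1 ->
  Derive a Q = 0 -> al <> 0 ->
  let sa := sqrt (Q^2 + (a Q)^2) in
  let sb := sqrt (Q^2 + (B_of l r al be (a Q))^2) in
  let u := sa + d * Q in let v := sb + d * Q in
  let p := Q / sa + d in let q := Q / sb + d in let c := 1 - d^2 in
  is_derive (HH l r al be d a) Q (d*(p*v+q*u)*ln (u/v) + d*(p*v - q*u) + c*(u - v) + Q*c*(p - q)).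
Proof.
intros Hd HA HB Hdd H0 Hal sa sb u v p q c.
assert (Hsa : Rabs Q < sa) by (apply sqrt_gt_abs; auto).
assert (Hsb : Rabs Q < sb) by (apply sqrt_gt_abs; auto).
pose proof (uv_pos Q (a Q) d HA Hdd) as Hu.
pose proof (uv_pos Q (B_of l r al be (a Q)) d HB Hdd) as Hv.
fold sa in Hu. fold sb in Hv. fold u in Hu. fold v in Hv.
unfold B_of in *. unfold HH.
assert (HB2 : forall z, 0 < z -> 0 < Q*(Q*1) + z*(z*1)) by (intros; nra).
auto_derive.
{ repeat split; first [apply Hd | exact (Rgt_not_eq _ _ Hv) | exact (Rdiv_lt_0_compat _ _ Hu Hv) | (apply HB2; assumption)]. }
replace (sqrt (Q * (Q * 1) + a Q * (a Q * 1))) with sa by reflexivity.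
replace (sqrt (Q * (Q * 1) + ((1 - be) / al * (l + - a Q) + r) * (((1 - be) / al * (l + - a Q) + r) * 1))) with sb by reflexivity.
replace (Derive (fun x : R => a x) Q) with (Derive a Q) by reflexivity.
rewrite H0.
replace (ln ((sa + d * Q) * / (sb + d * Q))) with (ln (u / v)) by reflexivity.
set (LL := ln (u / v)).
assert (sa <> 0) by (pose proof (Rabs_pos Q); lra).
assert (sb <> 0) by (pose proof (Rabs_pos Q); lra).
unfold p, q, c, u, v in *. field. repeat split; lra.
Qed.

Lemma A_deriv l r al be d (a : R -> R) Q : 0 < l -> 0 < r -> 0 < al -> al < be -> be < 1 -> -1 < d < 1 ->
  (forall x, 0 < a x < A_M l r al be /\ G2 l r al be x (a x) d = 0) -> (forall x, ex_derive a x) ->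
  let sa := sqrt (Q^2 + (a Q)^2) in
  let sb := sqrt (Q^2 + (B_of l r al be (a Q))^2) in
  let u := sa + d * Q in let v := sb + d * Q in
  let D := 1 + a Q / u + (1 - be) / al * B_of l r al be (a Q) / v in
  0 < D /\ Derive a Q = HH l r al be d a Q / (u * v) / D.
Proof.
intros Hl Hr Hal Hab Hb1 Hdd Hsol Hd sa sb u v D.
destruct (Hsol Q) as [[HA HAM] _].
assert (HB : 0 < B_of l r al be (a Q)) by (apply B_pos; auto).
pose proof (G_deriv l r al be d a Q Hd HA HB Hdd) as HG. cbv zeta in HG.
assert (HG0 : is_derive (fun x => G2 l r al be x (a x) d) Q 0).
{ apply is_derive_ext with (f := fun _ => 0). intros t. symmetry. apply Hsol. auto_derive; auto. }
apply is_derive_unique in HG. apply is_derive_unique in HG0. rewrite HG0 in HG.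
pose proof (uv_pos Q (a Q) d HA Hdd) as Hu.
pose proof (uv_pos Q (B_of l r al be (a Q)) d HB Hdd) as Hv.
fold sa sb u v in Hu, Hv, HG.
assert (Hk : 0 < (1 - be) / al) by (apply Rdiv_lt_0_compat; lra).
assert (HD : 0 < D).
{ unfold D. assert (0 < a Q / u) by (apply Rdiv_lt_0_compat; auto).
  assert (0 < (1 - be) / al * B_of l r al be (a Q) / v) by (apply Rdiv_lt_0_compat; auto; apply Rmult_lt_0_compat; auto).
  lra. }
split; auto.
replace (HH l r al be d a Q) with (d * (u * v) * ln (u / v) + Q * (1 - d ^ 2) * (u - v)) by reflexivity.
fold D in HG.
set (X := (d * (u * v) * ln (u / v) + Q * (1 - d ^ 2) * (u - v)) / (u * v)) in *.
replace (Derive a Q) with ((X - (X - D * Derive a Q)) / D) by (field; lra).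
rewrite <- HG. field. lra.
Qed.

Lemma sgn_pos x : 0 < x -> sgn x = 1.
Proof. intros. unfold sgn. destruct (Rlt_dec 0 x); [reflexivity | lra]. Qed.
Lemma sgn_neg x : x < 0 -> sgn x = -1.
Proof. intros. unfold sgn. destruct (Rlt_dec 0 x); [lra|]. destruct (Rlt_dec x 0); [reflexivity|lra]. Qed.
Lemma sgn_0 : sgn 0 = 0.
Proof. unfold sgn. destruct (Rlt_dec 0 0); [lra|]. destruct (Rlt_dec 0 0); [lra|reflexivity]. Qed.
Lemma sgn_div_pos x y : 0 < y -> sgn (x / y) = sgn x.
Proof.
intros Hy. destruct (Rtotal_order x 0) as [H|[H|H]].
- rewrite !sgn_neg; auto. apply Ropp_lt_cancel. replace (- (x / y)) with ((- x) / y) by (field; lra). rewrite Ropp_0. apply Rdiv_lt_0_compat; lra.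
- subst. replace (0 / y) with 0 by (field; lra). reflexivity.
- rewrite !sgn_pos; auto. apply Rdiv_lt_0_compat; lra.
Qed.

Lemma P1 (Q sa sb d sg : R) : 0 <= Q -> 0 < d < 1 -> (sg = 1 \/ sg = -1) ->
  0 < sa + d * Q -> 0 < sb + d * Q -> 0 < sg * (sa - sb) ->
  0 < sg * (d * ((sa + d*Q) * (sb + d*Q)) * ln ((sa + d*Q) / (sb + d*Q)) + Q * (1 - d^2) * ((sa + d*Q) - (sb + d*Q))).
Proof.
intros HQ Hd Hsg Hu Hv Hs.
set (u := sa + d*Q) in *. set (v := sb + d*Q) in *.
assert (Huv : 0 < u * v) by (apply Rmult_lt_0_compat; auto).
assert (Hc : 0 < 1 - d^2) by nra.
destruct Hsg as [-> | ->].
- assert (u > v) by (unfold u, v; lra).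
  assert (0 < ln (u / v)).
  { rewrite <- ln_1. apply ln_increasing. lra. apply (Rmult_lt_reg_r v); auto.
    unfold Rdiv. rewrite Rmult_assoc, Rinv_l; lra. }
  assert (0 < d * (u * v) * ln (u / v)) by (repeat apply Rmult_lt_0_compat; lra).
  assert (0 <= Q * (1 - d ^ 2) * (u - v)) by (repeat apply Rmult_le_pos; lra).
  lra.
- assert (u < v) by (unfold u, v; lra).
  assert (ln (u / v) < 0).
  { rewrite <- ln_1. apply ln_increasing. apply Rdiv_lt_0_compat; auto. apply (Rmult_lt_reg_r v); auto.
    unfold Rdiv. rewrite Rmult_assoc, Rinv_l; lra. }
  assert (0 < d * (u * v) * - ln (u / v)) by (repeat apply Rmult_lt_0_compat; lra).
  assert (0 <= Q * (1 - d ^ 2) * (v - u)) by (repeat apply Rmult_le_pos; lra).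
  nra.
Qed.

Lemma P2 (s c d u v LL sg : R) : 0 < s -> 0 < u -> 0 < v -> 0 < c -> 0 < d ->
  (sg = 1 \/ sg = -1) -> 0 < sg * (u - v) -> LL^2 * (u * v) <= (u - v)^2 ->
  d^2 * (u * v) < s^2 * c^2 ->
  sg * (d * (u * v) * LL - s * c * (u - v)) < 0.
Proof.
intros Hs Hu Hv Hc Hd Hsg Hsuv HLL Hb.
set (X := d * (u * v) * LL). set (Y := s * c * (sg * (u - v))).
assert (HY : 0 < Y) by (unfold Y; apply Rmult_lt_0_compat; [apply Rmult_lt_0_compat|]; auto).
assert (Hsg2 : sg^2 = 1) by (destruct Hsg as [-> | ->]; ring).
assert (Huv : 0 < u * v) by (apply Rmult_lt_0_compat; auto).
assert (H2 : 0 < (u - v)^2) by (assert (sg * (u - v) <> 0) by lra; assert (u - v <> 0) by (intro; apply H; rewrite H0; ring); apply pow2_gt_0; auto).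
assert (HX2 : X^2 <= d^2 * (u * v) * (u - v)^2).
{ unfold X. replace ((d * (u * v) * LL)^2) with (d^2 * (u * v) * (LL^2 * (u * v))) by ring.
  apply Rmult_le_compat_l; [nra|auto]. }
assert (HY2 : Y^2 = s^2 * c^2 * (u - v)^2) by (unfold Y; replace ((s * c * (sg * (u - v)))^2) with (s^2 * c^2 * sg^2 * (u - v)^2) by ring; rewrite Hsg2; ring).
assert (HXY : (sg * X)^2 < Y^2).
{ replace ((sg * X)^2) with (sg^2 * X^2) by ring. rewrite Hsg2, HY2.
  assert (d^2 * (u * v) * (u - v)^2 < s^2 * c^2 * (u - v)^2) by (apply Rmult_lt_compat_r; auto). lra. }
assert (sg * X < Y) by nra.
replace (sg * (X - s * c * (u - v))) with (sg * X - Y) by (unfold Y; ring).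
clearbody X Y. lra.
Qed.

Lemma sqrt_le_sum s A : 0 <= s -> 0 <= A -> sqrt (s^2 + A^2) <= s + A.
Proof.
intros. rewrite <- (sqrt_pow2 (s + A)) by lra. apply sqrt_le_1; nra.
Qed.

Lemma Pbound s A B M d : 0 < s -> 0 < A < M -> 0 < B < M -> 0 < d < 1 ->
  d * M / (1 - d) + 1 <= s ->
  let u := sqrt (s^2 + A^2) - d * s in let v := sqrt (s^2 + B^2) - d * s in
  d^2 * (u * v) < s^2 * (1 - d^2)^2.
Proof.
intros Hs HA HB Hd Hsb u v.
assert (Hu : 0 < u) by (unfold u; pose proof (sqrt_gt_abs s A ltac:(lra)); rewrite Rabs_pos_eq in H; nra).
assert (Hv : 0 < v) by (unfold v; pose proof (sqrt_gt_abs s B ltac:(lra)); rewrite Rabs_pos_eq in H; nra).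
assert (Hu2 : u < (1 - d) * s + M) by (unfold u; pose proof (sqrt_le_sum s A ltac:(lra) ltac:(lra)); nra).
assert (Hv2 : v < (1 - d) * s + M) by (unfold v; pose proof (sqrt_le_sum s B ltac:(lra) ltac:(lra)); nra).
assert (Huv : u * v < ((1 - d) * s + M)^2).
{ clearbody u v. nra. }
assert (HM : d * M <= (1 - d) * s - (1 - d)).
{ apply (Rmult_le_compat_l (1 - d)) in Hsb; [|lra].
  replace ((1 - d) * (d * M / (1 - d) + 1)) with (d * M + (1 - d)) in Hsb by (field; lra). lra. }
assert (H1 : d * ((1 - d) * s + M) <= s * (1 - d^2)) by nra.
assert (H2 : 0 <= d * ((1 - d) * s + M)) by nra.
assert (H3 : (d * ((1 - d) * s + M))^2 <= (s * (1 - d^2))^2) by (apply pow_incr; lra).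
assert (d^2 * (u * v) < d^2 * ((1 - d) * s + M)^2) by (clearbody u v; apply Rmult_lt_compat_l; nra).
nra.
Qed.

Lemma key_ineqQ Q sa sb d LL : Q < 0 -> - Q < sa -> - Q < sb -> 0 < d < 1 -> sa <> sb ->
  2*d*((sa + d*Q)*(sb + d*Q)) <= (-Q)*(1-d^2)*((sa + d*Q)+(sb + d*Q)) ->
  (-Q)^2*(1-d^2)^2 <= d^2*((sa + d*Q)*(sb + d*Q)) ->
  d*((sa + d*Q)*(sb + d*Q))*LL + Q*(1-d^2)*((sa + d*Q)-(sb + d*Q)) = 0 ->
  0 < (sa - sb) * (d*((Q/sa + d)*(sb + d*Q)+(Q/sb + d)*(sa + d*Q))*LL
      + d*((Q/sa + d)*(sb + d*Q) - (Q/sb + d)*(sa + d*Q)) + (1 - d^2)*((sa + d*Q) - (sb + d*Q))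
      + Q*(1 - d^2)*((Q/sa + d) - (Q/sb + d))).
Proof.
intros HQ Ha Hb Hd Hne Hlow Hup HLL.
assert (E1 : forall z, z - d * - Q = z + d * Q) by (intros; ring).
pose proof (key_ineq (-Q) sa sb d LL ltac:(lra) Ha Hb Hd Hne) as K.
rewrite !E1 in K.
specialize (K Hlow Hup).
assert (HLL' : d * ((sa + d * Q) * (sb + d * Q)) * LL = - Q * (1 - d ^ 2) * (sa + d * Q - (sb + d * Q))) by lra.
specialize (K HLL'). cbv zeta in K. try rewrite !E1 in K.
eapply Rlt_le_trans; [exact K|]. right. field. split; lra.
Qed.
Lemma band_low u v s c d LL : 0 < u -> 0 < v -> 0 < d -> u - v <> 0 ->
  2 * (u - v)^2 <= LL * (u - v) * (u + v) -> d * (u * v) * LL = s * c * (u - v) ->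
  2 * d * (u * v) <= s * c * (u + v).
Proof.
intros Hu Hv Hd Hne H1 H2.
assert (Hp : 0 < (u - v)^2) by (apply pow2_gt_0; auto).
assert (Huv : 0 < d * (u * v)) by (apply Rmult_lt_0_compat; [lra|apply Rmult_lt_0_compat; lra]).
assert (H3 : d * (u * v) * (2 * (u - v)^2) <= d * (u * v) * (LL * (u - v) * (u + v))) by (apply Rmult_le_compat_l; lra).
replace (d * (u * v) * (LL * (u - v) * (u + v))) with ((d * (u * v) * LL) * (u - v) * (u + v)) in H3 by ring.
rewrite H2 in H3.
apply (Rmult_le_reg_r ((u - v)^2)); auto.
replace (s * c * (u - v) * (u - v) * (u + v)) with (s * c * (u + v) * (u - v)^2) in H3 by ring.
lra.
Qed.

Lemma band_up u v s c d LL : 0 < u -> 0 < v -> 0 < d -> u - v <> 0 ->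
  LL^2 * (u * v) <= (u - v)^2 -> d * (u * v) * LL = s * c * (u - v) ->
  s^2 * c^2 <= d^2 * (u * v).
Proof.
intros Hu Hv Hd Hne H1 H2.
assert (Hp : 0 < (u - v)^2) by (apply pow2_gt_0; auto).
assert (Huv : 0 <= d^2 * (u * v)) by (apply Rmult_le_pos; [nra|apply Rmult_le_pos; lra]).
assert (H3 : d^2 * (u * v) * (LL^2 * (u * v)) <= d^2 * (u * v) * (u - v)^2) by (apply Rmult_le_compat_l; lra).
replace (d^2 * (u * v) * (LL^2 * (u * v))) with ((d * (u * v) * LL)^2) in H3 by ring.
rewrite H2 in H3.
apply (Rmult_le_reg_r ((u - v)^2)); auto.
replace ((s * c * (u - v))^2) with (s^2 * c^2 * (u - v)^2) in H3 by ring.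
lra.
Qed.

Lemma main_gen l r al be d (a : R -> R) sg :
  0 < l -> 0 < r -> 0 < al -> al < be -> be < 1 -> 0 < d < 1 ->
  (sg = 1 /\ r < l) \/ (sg = -1 /\ l < r) ->
  (forall x, 0 < a x < A_M l r al be /\ G2 l r al be x (a x) d = 0) -> (forall x, ex_derive a x) ->
  exists Qm, Qm < 0 /\ forall Q, (Qm < Q -> sgn (Derive a Q) = sg) /\ (Q < Qm -> sgn (Derive a Q) = - sg).
Proof.
intros Hl Hr Hal Hab Hb1 Hd Hsg Hsol Hder.
assert (Hdd : -1 < d < 1) by lra.
assert (Hsg1 : sg = 1 \/ sg = -1) by (destruct Hsg as [[-> _]|[-> _]]; auto).
assert (HA : forall x, 0 < a x) by (intros x; apply (Hsol x)).
assert (HB : forall x, 0 < B_of l r al be (a x)) by (intros x; apply B_pos; auto; apply (Hsol x)).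
assert (Hss : forall x, 0 < sg * (sqrt (x^2 + (a x)^2) - sqrt (x^2 + (B_of l r al be (a x))^2))).
{ intros x. destruct (Hsol x) as [HAx HGx].
  destruct (AB_sign l r al be x (a x) d Hl Hr Hal Hab Hb1 Hd HAx HGx) as [H1 [H2 _]].
  pose proof (HA x). pose proof (HB x).
  destruct Hsg as [[-> Hrl]|[-> Hlr]].
  - specialize (H1 Hrl). assert (sqrt (x^2 + (B_of l r al be (a x))^2) < sqrt (x^2 + (a x)^2)) by (apply sqrt_lt_1; nra). lra.
  - specialize (H2 Hlr). assert (sqrt (x^2 + (a x)^2) < sqrt (x^2 + (B_of l r al be (a x))^2)) by (apply sqrt_lt_1; nra). lra. }
set (f := fun Q => sg * HH l r al be d a Q).
set (M := A_M l r al be + (1 - be) / al * l + r).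
assert (Hk : 0 < (1 - be) / al) by (apply Rdiv_lt_0_compat; lra).
destruct (crossing f (- (d * M / (1 - d)) - 1)) as [Qm [HQm Hf]].
- intros x. apply exd_cont. apply ex_derive_scal. apply H_exd; auto.
- intros x Hx. unfold f, HH. apply P1; [lra|exact Hd|exact Hsg1|apply uv_pos; [apply HA|exact Hdd]|apply uv_pos; [apply (HB x)|exact Hdd]|apply (Hss x)].
- intros x Hx. unfold f, HH.
  set (s := - x).
  assert (Hs : 0 < s).
  { unfold s. assert (0 < d * M / (1 - d)).
    { apply Rdiv_lt_0_compat; [|lra]. apply Rmult_lt_0_compat; [lra|]. unfold M, A_M.
      assert (0 < al / (1 - be) * r) by (apply Rmult_lt_0_compat; [apply Rdiv_lt_0_compat|]; lra).
      assert (0 < (1 - be) / al * l) by (apply Rmult_lt_0_compat; lra). lra. }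
    lra. }
  assert (Ex : x = - s) by (unfold s; ring).
  assert (Ex2 : x^2 = s^2) by (rewrite Ex; ring).
  set (sa := sqrt (x^2 + (a x)^2)). set (sb := sqrt (x ^ 2 + ((1 - be) / al * (l - a x) + r) ^ 2)).
  assert (Hu : 0 < sa + d * x) by (apply uv_pos; auto).
  assert (Hv : 0 < sb + d * x) by (apply uv_pos; auto; apply (HB x)).
  pose proof (Hss x) as Hsx. fold sa in Hsx. change (B_of l r al be (a x)) with ((1 - be) / al * (l - a x) + r) in Hsx. fold sb in Hsx.
  replace (sg * (d * ((sa + d * x) * (sb + d * x)) * ln ((sa + d * x) / (sb + d * x)) +
     x * (1 - d ^ 2) * (sa + d * x - (sb + d * x))))
    with (sg * (d * ((sa + d * x) * (sb + d * x)) * ln ((sa + d * x) / (sb + d * x)) -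
     s * (1 - d ^ 2) * (sa + d * x - (sb + d * x)))) by (rewrite Ex; ring).
  apply P2; auto.
  + nra.
  + lra.
  + replace (sa + d * x - (sb + d * x)) with (sa - sb) by ring. exact Hsx.
  + apply logmean_upper; auto.
  + assert (Hb2 := Pbound s (a x) ((1 - be) / al * (l - a x) + r) M d Hs).
    cbv zeta in Hb2.
    replace (sa + d * x) with (sqrt (s ^ 2 + a x ^ 2) - d * s) by (unfold sa; rewrite Ex2, Ex; ring).
    replace (sb + d * x) with (sqrt (s ^ 2 + ((1 - be) / al * (l - a x) + r) ^ 2) - d * s) by (unfold sb; rewrite Ex2, Ex; ring).
    apply Hb2; auto.
    * destruct (Hsol x) as [[H1 H2] _]. split; auto. unfold M.
      assert (0 < (1 - be) / al * l) by (apply Rmult_lt_0_compat; lra). lra.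
    * split. apply (HB x). unfold M. unfold A_M. 
      assert (0 < al / (1 - be) * r) by (apply Rmult_lt_0_compat; [apply Rdiv_lt_0_compat|]; lra).
      pose proof (HA x). assert (0 < (1 - be) / al * a x) by (apply Rmult_lt_0_compat; lra). nra.
    * lra.
- intros x Hx Hfx.
  assert (HHx : HH l r al be d a x = 0).
  { unfold f in Hfx. destruct Hsg1 as [E|E]; rewrite E in Hfx; lra. }
  destruct (A_deriv l r al be d a x Hl Hr Hal Hab Hb1 Hdd Hsol Hder) as [HD Hform].
  cbv zeta in HD, Hform.
  assert (Hda : Derive a x = 0) by (rewrite Hform, HHx; unfold Rdiv; ring).
  pose proof (H_deriv0 l r al be d a x Hder (HA x) (HB x) Hdd Hda ltac:(lra)) as HDer.
  cbv zeta in HDer.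
  set (sa := sqrt (x^2 + (a x)^2)) in *. set (sb := sqrt (x ^ 2 + B_of l r al be (a x) ^ 2)) in *.
  set (LL := ln ((sa + d * x) / (sb + d * x))) in *.
  eexists. split. apply is_derive_scal. exact HDer.
  assert (Hu : 0 < sa + d * x) by (apply uv_pos; auto).
  assert (Hv : 0 < sb + d * x) by (apply uv_pos; auto).
  pose proof (Hss x) as Hsx. fold sa sb in Hsx.
  assert (Hne : sa <> sb) by (intro E; rewrite E in Hsx; lra).
  assert (Hne2 : (sa + d * x) - (sb + d * x) <> 0) by (intro E; apply Hne; lra).
  assert (HLLrel : d * ((sa + d * x) * (sb + d * x)) * LL = (- x) * (1 - d^2) * ((sa + d * x) - (sb + d * x))).
  { replace (HH l r al be d a x) with (d * ((sa + d * x) * (sb + d * x)) * LL + x * (1 - d^2) * ((sa + d * x) - (sb + d * x))) in HHx by reflexivity.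
    lra. }
  assert (Hxa : - x < sa) by (pose proof (sqrt_gt_abs x (a x) (HA x)); rewrite Rabs_left in H; auto).
  assert (Hxb : - x < sb) by (pose proof (sqrt_gt_abs x _ (HB x)); rewrite Rabs_left in H; auto).
  pose proof (key_ineqQ x sa sb d LL Hx Hxa Hxb Hd Hne) as K.
  pose proof (band_low _ _ (- x) (1 - d^2) d LL Hu Hv (proj1 Hd) Hne2 (logmean_lower _ _ Hu Hv) HLLrel) as Hlow.
  pose proof (band_up _ _ (- x) (1 - d^2) d LL Hu Hv (proj1 Hd) Hne2 (logmean_upper _ _ Hu Hv) HLLrel) as Hup.
  assert (HL0 : d * ((sa + d * x) * (sb + d * x)) * LL + x * (1 - d ^ 2) * (sa + d * x - (sb + d * x)) = 0) by lra.
  specialize (K Hlow Hup HL0).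
  destruct Hsg1 as [E|E]; rewrite E in *; nra.
- exists Qm. split; auto. intros Q.
  destruct (A_deriv l r al be d a Q Hl Hr Hal Hab Hb1 Hdd Hsol Hder) as [HD Hform].
  cbv zeta in HD, Hform.
  assert (Huv : 0 < (sqrt (Q ^ 2 + a Q ^ 2) + d * Q) * (sqrt (Q ^ 2 + B_of l r al be (a Q) ^ 2) + d * Q)).
  { apply Rmult_lt_0_compat; apply uv_pos; auto. }
  rewrite Hform, sgn_div_pos, sgn_div_pos; auto.
  destruct (Hf Q) as [Hf1 Hf2]. unfold f in Hf1, Hf2.
  split; intros HQ.
  + specialize (Hf1 HQ). destruct Hsg1 as [E|E]; rewrite E in *.
    * apply sgn_pos. lra.
    * apply sgn_neg. lra.
  + specialize (Hf2 HQ). destruct Hsg1 as [E|E]; rewrite E in *.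
    * apply sgn_neg. lra.
    * replace (- -1) with 1 by ring. apply sgn_pos. lra.
Qed.

Lemma sgn_opp x : sgn (- x) = - sgn x.
Proof.
destruct (Rtotal_order x 0) as [H|[H|H]].
- rewrite (sgn_neg x), (sgn_pos (- x)); [ring|lra|lra].
- subst. rewrite Ropp_0, sgn_0. ring.
- rewrite (sgn_pos x), (sgn_neg (- x)); [ring|lra|lra].
Qed.

Lemma main_pos l r al be d (a : R -> R) :
  0 < l -> 0 < r -> 0 < al -> al < be -> be < 1 -> 0 < d < 1 ->
  (forall x, 0 < a x < A_M l r al be /\ G2 l r al be x (a x) d = 0) -> (forall x, ex_derive a x) ->
  exists Qm, Qm < 0 /\ forall Q, (Qm < Q -> sgn (Derive a Q) = sgn (l - r)) /\
                                 (Q < Qm -> sgn (Derive a Q) = - sgn (l - r)).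
Proof.
intros Hl Hr Hal Hab Hb1 Hd Hsol Hder.
destruct (Rtotal_order l r) as [Hlr|[Hlr|Hlr]].
- destruct (main_gen l r al be d a (-1) Hl Hr Hal Hab Hb1 Hd (or_intror (conj eq_refl Hlr)) Hsol Hder) as [Qm [H1 H2]].
  exists Qm. split; auto. rewrite (sgn_neg (l - r)) by lra. exact H2.
- assert (Hc : forall x, a x = l).
  { intros x. destruct (Hsol x) as [HAx HGx].
    destruct (AB_sign l r al be x (a x) d Hl Hr Hal Hab Hb1 Hd HAx HGx) as [_ [_ H3]].
    specialize (H3 Hlr). unfold B_of in H3. subst r.
    assert (Hk : 0 < (1 - be) / al) by (apply Rdiv_lt_0_compat; lra).
    set (k := (1 - be) / al) in *. clearbody k. nra. }
  assert (HD : forall x, Derive a x = 0).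
  { intros x. rewrite (Derive_ext a (fun _ => l)) by apply Hc. apply Derive_const. }
  exists (-1). split; [lra|]. intros Q. rewrite HD, Hlr, Rminus_diag, sgn_0. split; intros; ring.
- destruct (main_gen l r al be d a 1 Hl Hr Hal Hab Hb1 Hd (or_introl (conj eq_refl Hlr)) Hsol Hder) as [Qm [H1 H2]].
  exists Qm. split; auto. rewrite (sgn_pos (l - r)) by lra. exact H2.
Qed.

Lemma G2_reflect l r al be Q A d : G2 l r al be (- Q) A d = G2 l r al be Q A (- d).
Proof.
unfold G2, N_of, S_a, S_b.
replace ((- Q)^2) with (Q^2) by ring.
replace (d * - Q) with (- d * Q) by ring.
ring.
Qed.

Theorem theorem3p6 (l r alpha beta D1 D2 : R) (Afun : R -> R) :
  0 < l -> 0 < r -> 0 < alpha -> alpha < beta -> beta < 1 ->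
  0 < D1 -> 0 < D2 ->
  (forall Q0, 0 < Afun Q0 < A_M l r alpha beta /\
              G2 l r alpha beta Q0 (Afun Q0) (delta_of D1 D2) = 0) ->
  (forall Q0, ex_derive Afun Q0) ->
  (D1 < D2 ->
     exists Qm, Qm < 0 /\
       forall Q0,
         (Qm < Q0 -> sgn (Derive Afun Q0) = sgn (l - r)) /\
         (Q0 < Qm -> sgn (Derive Afun Q0) = - sgn (l - r))) /\
  (D2 < D1 ->
     exists Qp, 0 < Qp /\
       forall Q0,
         (Q0 < Qp -> sgn (Derive Afun Q0) = - sgn (l - r)) /\
         (Qp < Q0 -> sgn (Derive Afun Q0) = sgn (l - r))).
Proof.
intros Hl Hr Hal Hab Hb1 HD1 HD2 Hsol Hder.
split.
- intros H12. apply (main_pos l r alpha beta (delta_of D1 D2) Afun); auto.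
  unfold delta_of. split.
  + apply Rdiv_lt_0_compat; lra.
  + apply (Rmult_lt_reg_r (D2 + D1)); [lra|]. unfold Rdiv. rewrite Rmult_assoc, Rinv_l; lra.
- intros H21.
  set (a2 := fun Q => Afun (- Q)).
  assert (Hd2 : 0 < - delta_of D1 D2 < 1).
  { unfold delta_of. split.
    + replace (- ((D2 - D1) / (D2 + D1))) with ((D1 - D2) / (D2 + D1)) by (field; lra).
      apply Rdiv_lt_0_compat; lra.
    + replace (- ((D2 - D1) / (D2 + D1))) with ((D1 - D2) / (D2 + D1)) by (field; lra).
      apply (Rmult_lt_reg_r (D2 + D1)); [lra|]. unfold Rdiv. rewrite Rmult_assoc, Rinv_l; lra. }
  assert (Hsol2 : forall x, 0 < a2 x < A_M l r alpha beta /\ G2 l r alpha beta x (a2 x) (- delta_of D1 D2) = 0).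
  { intros x. unfold a2. destruct (Hsol (- x)) as [H1 H2]. split; auto.
    rewrite <- G2_reflect. exact H2. }
  assert (Hder2 : forall x, ex_derive a2 x).
  { intros x. unfold a2. auto_derive. apply Hder. }
  assert (HDa2 : forall x, Derive a2 x = - Derive Afun (- x)).
  { intros x. unfold a2.
    assert (HR : Derive Ropp x = -1).
    { apply is_derive_unique. apply (is_derive_ext (fun t => - t)); [reflexivity|]. auto_derive; [exact I|ring]. }
    assert (HRe : ex_derive Ropp x) by (apply (ex_derive_ext (fun t => - t)); [reflexivity|]; auto_derive; exact I).
    rewrite (Derive_comp Afun Ropp x (Hder _) HRe). rewrite HR. ring. }
  destruct (main_pos l r alpha beta (- delta_of D1 D2) a2 Hl Hr Hal Hab Hb1 Hd2 Hsol2 Hder2) as [Qm [HQm H]].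
  exists (- Qm). split; [lra|]. intros Q0. destruct (H (- Q0)) as [H1 H2].
  rewrite HDa2, Ropp_involutive, sgn_opp in H1, H2.
  split; intros HQ.
  + specialize (H1 ltac:(lra)). lra.
  + specialize (H2 ltac:(lra)). lra.
Qed.
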